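(* Let $G$ be a graph, $t$ an integer and $k$ a nonnegative integer. For a set of vertices $X$, let $E_X$ denote the set of all pairs $\{u,v\}$ with $u,v\in X$, $u\neq v$. Start with $\mathcal{F}=\{E_X : X \text{ is a clique of size } t \text{ in } G\}$ and repeatedly apply the following rule until it is no longer applicable: if there is an edge $\{x,y\}$ of $G$ such that $\mathcal{F}_{xy}=\{X\subseteq V(G)\setminus\{x,y\} : E_{X\cup\{x,y\}}\in\mathcal{F}\}$ satisfies $|\mathcal{F}_{xy}|>2\cdot(t-2)!\cdot k^{t-2}$, find distinct sets $X_1,\ldots,X_{k+1}\in\mathcal{F}_{xy}$ forming a sunflower with core $Y$, remove from $\mathcal{F}$ every set $E_Z$ with $Y\cup\{x,y\}\subseteq Z$, and add $E_{Y\cup\{x,y\}}$ to $\mathcal{F}$. Let $\mathcal{F}'$ be the resulting family. Build a graph $G'=(V',E')$ as follows: start with $V'=E'=\emptyset$; for every $E_X\in\mathcal{F}'$, if $|X|=t$ set $V'\gets V'\cup X$ and $E'\gets E'\cup E_X$; if $|X|<t$, let $V_X$ be a set of $t-|X|$ new vertices and set $V'\gets V'\cup X\cup V_X$ and $E'\gets E'\cup E_{X\cup V_X}$. Then $(G,k)$ is a yes-instance of $K_t$-free edge deletion if and only if $(G',k)$ is a yes-instance of $K_t$-free edge deletion.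
   Context: In the $K_t$-free edge deletion problem, the input is a graph $G$ and an integer $k$, and the question is whether there is a set of at most $k$ edges of $G$ whose removal leaves a graph with no clique on $t$ vertices. Distinct sets $S_1,\ldots,S_p$ form a sunflower with core $Y$ if $S_i\cap S_j=Y$ for all $i\neq j$ and $S_i\setminus Y\neq\emptyset$ for every $i$; when the rule above is applicable, such a sunflower of $k+1$ sets exists by the sunflower lemma. *)

(* Defs.v *)
From mathcomp Require Import all_boot.
Set Implicit Arguments. Unset Strict Implicit. Unset Printing Implicit Defensive.

Definition EX (T : finType) (X : {set T}) : {set {set T}} :=
  [set e : {set T} | (e \subset X) && (#|e| == 2)].

Definition simple_graph (T : finType) (Vs : {set T}) (Es : {set {set T}}) :=
  forall e, e \in Es -> #|e| = 2 /\ e \subset Vs.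

Definition is_clique (T : finType) (Vs : {set T}) (Es : {set {set T}})
    (t : nat) (X : {set T}) :=
  [/\ X \subset Vs, #|X| = t & EX X \subset Es].

Definition Kt_free_del_yes (T : finType) (Vs : {set T}) (Es : {set {set T}})
    (t k : nat) :=
  exists S : {set {set T}}, [/\ S \subset Es, #|S| <= k &
    forall X : {set T}, ~ is_clique Vs (Es :\: S) t X].

Definition sunflower (T : finType) (m : nat) (Xs : 'I_m -> {set T}) (Y : {set T}) :=
  [/\ injective Xs,
      forall i j, i != j -> Xs i :&: Xs j = Y &
      forall i, Xs i :\: Y != set0].

Section Reduction.
Variables (V : finType) (EG : {set {set V}}) (t k : nat).

Definition F_init : {set {set {set V}}} :=
  [set EX X | X in [set X : {set V} | (#|X| == t) && (EX X \subset EG)]].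

Definition Fxy (F : {set {set {set V}}}) (x y : V) : {set {set V}} :=
  [set X : {set V} | (X \subset ~: [set x; y]) && (EX (X :|: [set x; y]) \in F)].

Definition rule_step (F F' : {set {set {set V}}}) : Prop :=
  exists (x y : V) (Xs : 'I_k.+1 -> {set V}) (Y : {set V}),
    [/\ [set x; y] \in EG,
        #|Fxy F x y| > 2 * (t - 2)`! * k ^ (t - 2),
        (forall i, Xs i \in Fxy F x y),
        sunflower Xs Y &
        F' = [set e in F | ~~ [exists Z : {set V},
                                 (Y :|: [set x; y] \subset Z) && (e == EX Z)]]
             :|: [set EX (Y :|: [set x; y])]].

Definition rule_applicable (F : {set {set {set V}}}) : Prop :=
  exists (x y : V) (Xs : 'I_k.+1 -> {set V}) (Y : {set V}),
    [/\ [set x; y] \in EG,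
        #|Fxy F x y| > 2 * (t - 2)`! * k ^ (t - 2),
        (forall i, Xs i \in Fxy F x y) &
        sunflower Xs Y].

Definition result_family (F' : {set {set {set V}}}) : Prop :=
  exists (n : nat) (F : nat -> {set {set {set V}}}),
    [/\ F 0 = F_init,
        (forall i, i < n -> rule_step (F i) (F i.+1)),
        F n = F' &
        ~ rule_applicable F'].

(* Vertex type of G': old vertices plus fresh vertices (X, i) *)
Definition Wtype : finType := (V + ({set V} * 'I_t))%type.

Definition newV (X : {set V}) : {set Wtype} :=
  [set inr (X, i) | i : 'I_t & i < t - #|X|].

Definition liftV (X : {set V}) : {set Wtype} := inl @: X.

Definition Gp_V (F' : {set {set {set V}}}) : {set Wtype} :=
  (\bigcup_(X : {set V} | (EX X \in F') && (#|X| == t)) liftV X) :|: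
  (\bigcup_(X : {set V} | (EX X \in F') && (#|X| < t)) (liftV X :|: newV X)).

Definition Gp_E (F' : {set {set {set V}}}) : {set {set Wtype}} :=
  (\bigcup_(X : {set V} | (EX X \in F') && (#|X| == t)) EX (liftV X)) :|:
  (\bigcup_(X : {set V} | (EX X \in F') && (#|X| < t)) EX (liftV X :|: newV X)).

End Reduction.

(* Main.v *)
Require Import Defs.
From mathcomp Require Import all_boot.
Set Implicit Arguments. Unset Strict Implicit. Unset Printing Implicit Defensive.

Lemma inEX (T : finType) (X e : {set T}) : (e \in EX X) = (e \subset X) && (#|e| == 2).
Proof. by rewrite inE. Qed.

Lemma EX_mono (T : finType) (X Y : {set T}) : X \subset Y -> EX X \subset EX Y.
Proof.
move=> sXY; apply/subsetP=> e; rewrite !inEX => /andP[seX ->].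
by rewrite (subset_trans seX sXY).
Qed.

Lemma EX_sub (T : finType) (Z W : {set T}) :
  1 < #|Z| -> EX Z \subset EX W -> Z \subset W.
Proof.
move=> cZ sZW; apply/subsetP=> z zZ.
have : 0 < #|Z :\ z| by rewrite (cardsD1 z Z) zZ in cZ.
case/card_gt0P=> z'; rewrite !inE => /andP[nz z'Z].
have : [set z; z'] \in EX Z.
  by rewrite inEX cards2 (eq_sym z z') nz subUset !sub1set zZ z'Z.
move/(subsetP sZW); rewrite inEX => /andP[/subsetP H _].
by apply: H; rewrite !inE eqxx.
Qed.

Section Inv.
Variables (V : finType) (EG : {set {set V}}) (t k : nat).
Hypothesis HG : simple_graph [set: V] EG.
Hypothesis Ht : 2 <= t.

Definition Inv1 (S : {set {set V}}) (F : {set {set {set V}}}) :=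
  forall e, e \in F -> e \subset EG /\ exists2 f, f \in e & f \in S.

Definition Inv2 (F : {set {set {set V}}}) :=
  forall X : {set V}, #|X| = t -> EX X \subset EG ->
    exists W : {set V}, [/\ W \subset X, 1 < #|W| & EX W \in F].

Lemma xy_neq (x y : V) : [set x; y] \in EG -> x != y.
Proof. by case/HG; rewrite cards2; case: (x != y). Qed.

Lemma Inv1_step (S : {set {set V}}) F F' : #|S| <= k -> rule_step EG t k F F' -> Inv1 S F -> Inv1 S F'.
Proof.
move=> cS [x [y [Xs [Y [Hxy _ HXs [_ Hsun _] ->]]]]] HI e.
have HXsF i : EX (Xs i :|: [set x; y]) \in F.
  by have := HXs i; rewrite inE => /andP[].
rewrite in_setU => /orP[|].
  by rewrite inE => /andP[eF _]; exact: HI.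
rewrite inE => /eqP ->; split.
  have kp : 0 < k.
    case: (HI _ (HXsF ord0)) => _ [f _ fS].
    by apply: leq_trans cS; apply/card_gt0P; exists f.
  have n0 : (ord0 : 'I_k.+1) != ord_max by rewrite -(inj_eq val_inj) /= eq_sym -lt0n.
  have := Hsun _ _ n0 => YE.
  apply: subset_trans (EX_mono _) (proj1 (HI _ (HXsF ord0))).
  by rewrite -YE setUSS // subsetIl.
set W := Y :|: [set x; y].
case: (boolP [exists f, (f \in EX W) && (f \in S)]) => [/existsP [f /andP[fW fS]] | Hno].
  by exists f.
exfalso.
pose g (i : 'I_k.+1) := odflt set0 [pick f | (f \in S) && (f \in EX (Xs i :|: [set x; y]))].
have Hg i : (g i \in S) && (g i \in EX (Xs i :|: [set x; y])).
  rewrite /g; case: pickP => [f -> //|H0].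
  case: (HI _ (HXsF i)) => _ [f fe fS].
  by have := H0 f; rewrite fS fe.
have ginj : injective g.
  move=> i j gij; apply/eqP; apply: contraT => nij.
  have /andP[giS giE] := Hg i.
  have /andP[_ gjE] := Hg j.
  have giW : g i \notin EX W.
    apply: contra Hno => giW; apply/existsP; exists (g i); by rewrite giW.
  move: giE giW; rewrite !inEX => /andP[sgi ->]; rewrite andbT.
  case/subsetPn => u ug uW.
  move: gjE; rewrite inEX -gij => /andP[/subsetP sgj _].
  have ui := subsetP sgi _ ug; have uj := sgj _ ug.
  move: ui uj uW; rewrite /W -(Hsun _ _ nij) !in_setU !in_setI.
  by case: (u \in Xs i); case: (u \in Xs j); case: (u \in [set x]); case: (u \in [set y]).
have : #|[set g i | i : 'I_k.+1]| <= #|S|.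
  apply: subset_leq_card; apply/subsetP=> f /imsetP [i _ ->].
  by case/andP: (Hg i).
rewrite card_imset // card_ord => H.
by have := leq_trans H cS; rewrite ltnn.
Qed.

Lemma Inv2_step F F' : rule_step EG t k F F' -> Inv2 F -> Inv2 F'.
Proof.
move=> [x [y [Xs [Y [Hxy _ _ _ ->]]]]] HI X cX sX.
have [W [sWX cW WF]] := HI X cX sX.
have c2 : 1 < #|Y :|: [set x; y]|.
  apply: leq_trans (subset_leq_card (subsetUr Y [set x; y])).
  by rewrite cards2 (xy_neq Hxy).
case: (boolP [exists Z : {set V}, (Y :|: [set x; y] \subset Z) && (EX W == EX Z)]).
  case/existsP=> Z /andP[sZ /eqP EWZ].
  exists (Y :|: [set x; y]); split => //.
    apply: (subset_trans sZ (subset_trans _ sWX)).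
    apply: EX_sub; last by rewrite EWZ.
    exact: leq_trans c2 (subset_leq_card sZ).
  by rewrite in_setU in_set1 eqxx orbT.
move=> Hn; exists W; split => //.
rewrite in_setU; apply/orP; left; rewrite inE; apply/andP; split => //.
Qed.

Lemma Inv1_init (S : {set {set V}}) :
  (forall X : {set V}, ~ is_clique [set: V] (EG :\: S) t X) -> Inv1 S (F_init EG t).
Proof.
move=> HS e /imsetP [X]; rewrite inE => /andP[/eqP cX sX] ->; split => //.
case: (boolP (EX X \subset EG :\: S)) => [H|].
  by case: (HS X); split => //; apply: subsetT.
case/subsetPn => f fX; rewrite in_setD => /nandP [/negPn fS|]; first by exists f.
by rewrite (subsetP sX _ fX).
Qed.

Lemma Inv2_init : Inv2 (F_init EG t).
Proof.
move=> X cX sX; exists X; split => //; first by rewrite cX.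
by apply/imsetP; exists X => //; rewrite inE cX eqxx.
Qed.

Lemma Inv_run (P : {set {set {set V}}} -> Prop) F' :
  P (F_init EG t) -> (forall F F'', rule_step EG t k F F'' -> P F -> P F'') ->
  result_family EG t k F' -> P F'.
Proof.
move=> H0 Hs [n [F [F0 Hst <- _]]].
suff : forall i, i <= n -> P (F i) by apply.
elim=> [|i IH] Hi; first by rewrite F0.
by apply: (Hs (F i)); [apply: Hst | apply: IH; apply: ltnW].
Qed.

End Inv.
Section G.
Variables (V : finType) (t : nat).
Implicit Types (X W : {set V}).

Definition is_inr (v : Wtype V t) := if v is inr _ then true else false.

Lemma inl_liftV X a : (inl a \in liftV t X) = (a \in X).
Proof. by rewrite /liftV mem_imset //; move=> ? ? []. Qed.

Lemma inr_liftV X p : (inr p \in liftV t X) = false.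
Proof. by apply/negbTE/negP; case/imsetP => ? _. Qed.

Lemma inl_newV X a : (inl a \in newV t X) = false.
Proof. by apply/negbTE/negP; case/imsetP => ? _. Qed.

Lemma inr_newV X W i : inr (W, i) \in newV t X -> W = X.
Proof. by case/imsetP => j _ [-> _]. Qed.

Lemma newV_t X : #|X| = t -> newV t X = set0.
Proof.
move=> cX; apply/setP => v; rewrite inE; apply/negbTE/imsetP => -[i].
by rewrite inE cX subnn.
Qed.

Lemma card_ltset m : m <= t -> #|[set i : 'I_t | i < m]| = m.
Proof.
move=> mt.
have -> : [set i : 'I_t | i < m] = widen_ord mt @: [set: 'I_m].
  apply/setP => i; rewrite inE; apply/idP/imsetP => [im|[j _ ->]]; last exact: (ltn_ord j).
  by exists (Ordinal im) => //; apply: val_inj.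
have wi : injective (widen_ord mt) by move=> a b /(congr1 val) /= /val_inj.
by rewrite (card_imset _ wi) cardsT card_ord.
Qed.

Lemma card_C X : #|X| <= t -> #|liftV t X :|: newV t X| = t.
Proof.
move=> cX; rewrite cardsU.
have -> : liftV t X :&: newV t X = set0.
  apply/setP => -[a|p]; rewrite !inE ?inl_liftV ?inl_newV ?inr_liftV ?andbF //.
rewrite cards0 subn0 /liftV card_imset; last by move=> ? ? [].
rewrite /newV card_imset; last by move=> ? ? [].
by rewrite card_ltset ?leq_subr // subnKC.
Qed.

Variable F : {set {set {set V}}}.

Lemma GpE_inv f : f \in Gp_E t F ->
  exists X, [/\ EX X \in F, #|X| <= t & f \in EX (liftV t X :|: newV t X)].
Proof.
rewrite in_setU => /orP[] /bigcupP [X /andP[XF cX] fX]; exists X; split => //.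
- by rewrite (eqP cX).
- by apply: (subsetP (EX_mono (subsetUl _ _))).
- by apply: ltnW.
Qed.

Lemma GpE_sup X : EX X \in F -> #|X| <= t -> EX (liftV t X :|: newV t X) \subset Gp_E t F.
Proof.
move=> XF; rewrite leq_eqVlt => /orP[/eqP cX|cX].
  rewrite newV_t // setU0; apply: subset_trans (subsetUl _ _).
  by apply: (bigcup_sup X); rewrite XF cX eqxx.
apply: subset_trans (subsetUr _ _).
by apply: (bigcup_sup X); rewrite XF cX.
Qed.

Lemma GpV_sup X : EX X \in F -> #|X| <= t -> liftV t X :|: newV t X \subset Gp_V t F.
Proof.
move=> XF; rewrite leq_eqVlt => /orP[/eqP cX|cX].
  rewrite newV_t // setU0; apply: subset_trans (subsetUl _ _).
  by apply: (bigcup_sup X); rewrite XF cX eqxx.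
apply: subset_trans (subsetUr _ _).
by apply: (bigcup_sup X); rewrite XF cX.
Qed.

Lemma GpV_inr W i : inr (W, i) \in Gp_V t F -> EX W \in F /\ #|W| <= t /\ inr (W, i) \in newV t W.
Proof.
rewrite in_setU => /orP[] /bigcupP [X /andP[XF cX]]; first by rewrite inr_liftV.
rewrite in_setU inr_liftV /= => H; have E := inr_newV H; subst X.
by split => //; split => //; apply: ltnW.
Qed.

End G.

Lemma liftEX (V : finType) t (f X : {set V}) : f \in EX X -> liftV t f \in EX (liftV t X).
Proof.
rewrite !inEX => /andP[sfX cf]; rewrite imsetS //=.
by rewrite /liftV card_imset // => ? ? [].
Qed.

Lemma liftK (V : finType) t (f : {set Wtype V t}) :
  (forall p, inr p \notin f) -> f = liftV t [set a | inl a \in f].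
Proof.
move=> H; apply/setP => -[a|p]; first by rewrite inl_liftV inE.
by rewrite inr_liftV; apply/negbTE.
Qed.

Theorem lemma4 (V : finType) (EG : {set {set V}}) (t k : nat)
    (F' : {set {set {set V}}}) :
  simple_graph [set: V] EG ->
  2 <= t ->
  result_family EG t k F' ->
  Kt_free_del_yes [set: V] EG t k <->
  Kt_free_del_yes (Gp_V t F') (Gp_E t F') t k.
Proof.
move=> HG Ht HF; split.
- case=> S [sS cS HS].
  have I1 : Inv1 EG S F'.
    apply: (Inv_run (P := Inv1 EG S) _ _ HF); first exact: Inv1_init.
    by move=> F F'' st; apply: Inv1_step st.
  pose S' := [set liftV t e | e in S] :&: Gp_E t F'.
  exists S'; split.
  + exact: subsetIr.
  + apply: leq_trans (subset_leq_card (subsetIl _ _)) _.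
    exact: leq_trans (leq_imset_card _ _) cS.
  move=> K [sKV cK sK].
  have hit e0 : e0 \in S -> liftV t e0 \in EX K -> False.
    move=> e0S e0K; have := subsetP sK _ e0K; rewrite in_setD => /andP[nS inG].
    by move: nS; rewrite /S' in_setI imset_f // inG.
  case: (boolP [exists v, (v \in K) && is_inr v]).
    case/existsP => -[a|[W i]] /andP[vK] // _.
    have [WF [cW vN]] := GpV_inr (subsetP sKV _ vK).
    have KC : K \subset liftV t W :|: newV t W.
      apply/subsetP=> u uK; case: (eqVneq u (inr (W,i))) => [->|nu].
        by rewrite in_setU vN orbT.
      have : [set u; inr (W,i)] \in EX K.
        by rewrite inEX cards2 nu subUset !sub1set uK vK.
      move/(subsetP sK); rewrite in_setD => /andP[_ /GpE_inv [X [_ _]]].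
      rewrite inEX => /andP[/subsetP sub _].
      have := sub (inr (W,i)); rewrite !inE eqxx orbT => /(_ isT).
      rewrite inr_liftV /= => /inr_newV E; subst X.
      by move: (sub u); rewrite !inE eqxx; apply.
    have KE : K = liftV t W :|: newV t W.
      by apply/eqP; rewrite eqEcard KC (card_C cW) cK leqnn.
    have [_ [e0 e0W e0S]] := I1 _ WF.
    apply: (hit e0 e0S); rewrite KE.
    apply: (subsetP (EX_mono (subsetUl _ _))); exact: liftEX.
  move=> Hn.
  have KE : K = liftV t [set a | inl a \in K].
    apply: liftK => p; apply: contra Hn => pK; apply/existsP; exists (inr p); by rewrite pK.
  set K0 := [set a | inl a \in K] in KE.
  have cK0 : #|K0| = t by rewrite -cK KE /liftV card_imset // => ? ? [].
  have sK0 : EX K0 \subset EG.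
    apply/subsetP => f fK0.
    have := liftEX t fK0; rewrite -KE => /(subsetP sK); rewrite in_setD => /andP[_].
    case/GpE_inv => X [XF _]; rewrite !inEX => /andP[/subsetP sub cf].
    apply: (subsetP (proj1 (I1 _ XF))); rewrite inEX.
    move: fK0; rewrite inEX => /andP[_ ->]; rewrite andbT.
    apply/subsetP => a af.
    by move: (sub (inl a)); rewrite in_setU inl_newV orbF !inl_liftV; apply.
  case: (boolP (EX K0 \subset EG :\: S)) => [H|].
    by case: (HS K0); split => //; apply: subsetT.
  case/subsetPn => f fK0; rewrite in_setD (subsetP sK0 _ fK0) andbT => /negPn fS.
  by apply: (hit f fS); rewrite KE; exact: liftEX.
- case=> S' [sS' cS' HS'].
  have I2 : Inv2 EG t F'.
    apply: (Inv_run (P := Inv2 EG t) _ _ HF); first exact: Inv2_init.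
    by move=> F F'' st; apply: Inv2_step st.
  pose phi (e : {set Wtype V t}) : {set V} :=
    match [pick v | (v \in e) && is_inr v] with
    | Some (inr (W, _)) => odflt set0 [pick g | g \in EX W]
    | _ => [set a | inl a \in e] end.
  exists ((phi @: S') :&: EG); split.
  + exact: subsetIr.
  + apply: leq_trans (subset_leq_card (subsetIl _ _)) _.
    exact: leq_trans (leq_imset_card _ _) cS'.
  move=> X [_ cX sX].
  have sXG : EX X \subset EG := subset_trans sX (subsetDl _ _).
  have [W [sWX cW WF]] := I2 X cX sXG.
  have cWt : #|W| <= t by rewrite -cX subset_leq_card.
  set C := liftV t W :|: newV t W.
  have phiW f : f \in EX C -> phi f \in EX W.
    move=> H; have /andP[/subsetP fC cf] : (f \subset C) && (#|f| == 2) by rewrite -inEX.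
    rewrite /phi.
    case: pickP => [v /andP[vf iv] | Hn].
      case: v vf iv => [a|[W' i]] vf //= _.
      have := fC _ vf; rewrite in_setU inr_liftV /= => /inr_newV E; subst W'.
      case: pickP => [g //|Hg]; exfalso.
      have : W \subset set0.
        apply: EX_sub => //; apply/subsetP => g; by rewrite Hg.
      by rewrite subset0 => /eqP E; move: cW; rewrite E cards0.
    have fE : f = liftV t [set a | inl a \in f].
      by apply: liftK => p; apply/negP => pf; have := Hn (inr p); rewrite pf.
    rewrite inEX; apply/andP; split.
      apply/subsetP => a; rewrite inE => /fC.
      by rewrite in_setU inl_newV orbF inl_liftV.
    by rewrite -(eqP cf) {2}fE /liftV card_imset // => ? ? [].
  case: (boolP (EX C \subset Gp_E t F' :\: S')) => [H|].
    by case: (HS' C); split; [exact: GpV_sup | exact: card_C | ].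
  case/subsetPn => f fC; rewrite in_setD (subsetP (GpE_sup WF cWt) _ fC) andbT => /negPn fS.
  have pX : phi f \in EX X by apply: (subsetP (EX_mono sWX)); exact: phiW.
  move: (subsetP sX _ pX); rewrite in_setD in_setI imset_f //.
  by rewrite (subsetP sXG _ pX).
Qed.
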